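(* If $A$ and $B$ are finitely generated left-orderable groups that are both Prieto, then $A\times B$ is Prieto.
   Context: A positive cone of a group $G$ is a subsemigroup $P$ with $G=P\sqcup P^{-1}\sqcup\{1\}$. A finitely generated left-orderable group $G$ is Prieto if every positive cone of $G$ is coarsely connected with respect to the word metric $d_X$ of some (equivalently any) finite generating set $X$, i.e. for each positive cone $P$ there is $r\ge1$ such that any two elements of $P$ are joined by a sequence $p_0,\dots,p_n$ in $P$ with $d_X(p_i,p_{i+1})\le r$. *)

(* Defs.v *)
From Stdlib Require Import List.
Import ListNotations.
Set Implicit Arguments.

Record group := Group {
  gcar :> Type;
  gmul : gcar -> gcar -> gcar;
  gone : gcar;
  ginv : gcar -> gcar;
  gmulA : forall x y z, gmul x (gmul y z) = gmul (gmul x y) z;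
  gmul1 : forall x, gmul x gone = x;
  g1mul : forall x, gmul gone x = x;
  gmulV : forall x, gmul x (ginv x) = gone;
  gVmul : forall x, gmul (ginv x) x = gone
}.

Arguments gmul {g}.
Arguments gone {g}.
Arguments ginv {g}.

Definition prod_group (A B : group) : group.
Proof.
refine (@Group (A * B)%type
  (fun x y => (gmul (fst x) (fst y), gmul (snd x) (snd y)))
  (gone, gone)
  (fun x => (ginv (fst x), ginv (snd x))) _ _ _ _ _).
- intros; simpl; now rewrite !gmulA.
- intros [a b]; simpl; now rewrite !gmul1.
- intros [a b]; simpl; now rewrite !g1mul.
- intros [a b]; simpl; now rewrite !gmulV.
- intros [a b]; simpl; now rewrite !gVmul.
Defined.

Definition positive_cone {G : group} (P : G -> Prop) : Prop :=
  (forall x y, P x -> P y -> P (gmul x y)) /\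
  (forall g, P g \/ P (ginv g) \/ g = gone) /\
  (forall g, P g -> ~ P (ginv g)) /\
  (forall g, P g -> g <> gone) /\
  (forall g, P (ginv g) -> g <> gone).

Definition left_orderable (G : group) : Prop :=
  exists lt : G -> G -> Prop,
    (forall x, ~ lt x x) /\
    (forall x y z, lt x y -> lt y z -> lt x z) /\
    (forall x y, lt x y \/ x = y \/ lt y x) /\
    (forall g x y, lt x y -> lt (gmul g x) (gmul g y)).

(* Words over X ∪ X^{-1}: a letter (x, b) stands for x if b = false, x^{-1} if b = true. *)
Definition eval_word {G : group} (w : list (G * bool)) : G :=
  fold_right (fun (l : G * bool) (acc : G) => gmul (if snd l then ginv (fst l) else fst l) acc) (@gone G) w.

Definition word_over {G : group} (X : list G) (w : list (G * bool)) : Prop :=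
  forall l, In l w -> In (fst l) X.

Definition generates {G : group} (X : list G) : Prop :=
  forall g : G, exists w, word_over X w /\ eval_word w = g.

Definition finitely_generated (G : group) : Prop :=
  exists X : list G, generates X.

Definition dist_le {G : group} (X : list G) (r : nat) (g h : G) : Prop :=
  exists w, word_over X w /\ length w <= r /\ eval_word w = gmul (ginv g) h.

Definition coarsely_connected {G : group} (X : list G) (P : G -> Prop) : Prop :=
  exists r : nat, 1 <= r /\
    forall p q, P p -> P q ->
      exists (n : nat) (s : nat -> G),
        s 0 = p /\ s n = q /\
        (forall i, i <= n -> P (s i)) /\
        (forall i, i < n -> dist_le X r (s i) (s (S i))).

Definition prieto (G : group) : Prop :=
  finitely_generated G /\ left_orderable G /\
  exists X : list G, generates X /\
    forall P : G -> Prop, positive_cone P -> coarsely_connected X P.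

(* Main.v *)
Require Import Defs.
From Stdlib Require Import List Lia Classical Arith.
Import ListNotations.

Section G.
Variable G : group.

Lemma mul_cancel_l (x y z : G) : gmul x y = gmul x z -> y = z.
Proof.
  intro H. apply (f_equal (gmul (ginv x))) in H.
  rewrite !gmulA, gVmul, !g1mul in H. exact H.
Qed.

Lemma inv_unique (x y : G) : gmul x y = gone -> y = ginv x.
Proof. intro H. apply (mul_cancel_l x). now rewrite H, gmulV. Qed.

Lemma ginv_mul (x y : G) : ginv (gmul x y) = gmul (ginv y) (ginv x).
Proof.
  symmetry; apply inv_unique.
  rewrite <- gmulA, (gmulA _ y (ginv y) (ginv x)), gmulV, g1mul, gmulV. reflexivity.
Qed.

Lemma ginv_inv (x : G) : ginv (ginv x) = x.
Proof. symmetry; apply inv_unique; apply gVmul. Qed.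

Lemma ginv_one : ginv (@gone G) = gone.
Proof. symmetry; apply inv_unique; apply gmul1. Qed.

Lemma inv_mul_shift (g x y : G) : gmul (ginv (gmul g x)) (gmul g y) = gmul (ginv x) y.
Proof.
  rewrite ginv_mul, <- gmulA, (gmulA _ (ginv g) g y), gVmul, g1mul. reflexivity.
Qed.

Lemma eval_app (w1 w2 : list (G * bool)) :
  eval_word (w1 ++ w2) = gmul (eval_word w1) (eval_word w2).
Proof.
  induction w1 as [|l w1 IH]; simpl.
  - now rewrite g1mul.
  - rewrite IH. now rewrite gmulA.
Qed.

Definition inv_word (w : list (G * bool)) : list (G * bool) :=
  rev (map (fun l => (fst l, negb (snd l))) w).

Lemma eval_inv_word w : eval_word (inv_word w) = ginv (eval_word w).
Proof.
  induction w as [|[x b] w IH].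
  - simpl. now rewrite ginv_one.
  - unfold inv_word in *. simpl map. simpl rev. rewrite eval_app, IH.
    simpl. rewrite ginv_mul, gmul1. destruct b; simpl; rewrite ?ginv_inv; reflexivity.
Qed.

Lemma word_over_inv X w : word_over X w -> word_over X (inv_word w).
Proof.
  unfold word_over, inv_word. intros H l Hl.
  apply in_rev in Hl. apply in_map_iff in Hl. destruct Hl as [l0 [<- Hl0]].
  simpl. apply H. exact Hl0.
Qed.

Lemma dist_sym X r (g h : G) : dist_le X r g h -> dist_le X r h g.
Proof.
  intros [w [Hw [Hl He]]]. exists (inv_word w). split; [now apply word_over_inv|].
  split.
  - unfold inv_word. rewrite length_rev, length_map. exact Hl.
  - rewrite eval_inv_word, He, ginv_mul, ginv_inv. reflexivity.
Qed.

Lemma dist_mono X r r' (g h : G) : r <= r' -> dist_le X r g h -> dist_le X r' g h.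
Proof. intros Hr [w [Hw [Hl He]]]. exists w. repeat split; auto. lia. Qed.

Lemma dist_left X r (h u v : G) : dist_le X r u v -> dist_le X r (gmul h u) (gmul h v).
Proof. intros [w [Hw [Hl He]]]. exists w. repeat split; auto. now rewrite inv_mul_shift. Qed.

Lemma dist_refl0 X (g : G) : dist_le X 0 g g.
Proof. exists nil. split; [intros l []|]. split; [simpl; lia|]. simpl. now rewrite gVmul. Qed.

Lemma dist_right X r (g : G) w : word_over X w -> length w <= r ->
  dist_le X r g (gmul g (eval_word w)).
Proof. intros Hw Hl. exists w. repeat split; auto. now rewrite gmulA, gVmul, g1mul. Qed.

Definition conn (X : list G) (r : nat) (P : G -> Prop) (p q : G) : Prop :=
  exists (n : nat) (s : nat -> G),
    s 0 = p /\ s n = q /\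
    (forall i, i <= n -> P (s i)) /\
    (forall i, i < n -> dist_le X r (s i) (s (S i))).

Lemma conn_step X r (P : G -> Prop) p q : P p -> P q -> dist_le X r p q -> conn X r P p q.
Proof.
  intros Hp Hq Hd. exists 1, (fun i => match i with 0 => p | _ => q end).
  repeat split; auto.
  - intros [|i] _; auto.
  - intros i Hi. assert (i = 0) by lia. subst i. exact Hd.
Qed.

Lemma conn_trans X r (P : G -> Prop) p q y : conn X r P p y -> conn X r P y q -> conn X r P p q.
Proof.
  intros [n [s [s0 [sn [sP sd]]]]] [m [t [t0 [tm [tP td]]]]].
  exists (n + m), (fun i => if le_lt_dec i n then s i else t (i - n)).
  repeat split.
  - destruct (le_lt_dec 0 n); [auto | lia].
  - destruct (le_lt_dec (n + m) n).
    + assert (m = 0) by lia. subst m. replace (n + 0) with n by lia. rewrite sn, <- t0, tm. reflexivity.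
    + replace (n + m - n) with m by lia. exact tm.
  - intros i Hi. destruct (le_lt_dec i n); [apply sP; auto | apply tP; lia].
  - intros i Hi. destruct (le_lt_dec i n); destruct (le_lt_dec (S i) n).
    + apply sd; lia.
    + assert (i = n) by lia. subst i. replace (S n - n) with 1 by lia.
      rewrite sn, <- t0. apply td. lia.
    + lia.
    + replace (S i - n) with (S (i - n)) by lia. apply td. lia.
Qed.

Lemma conn_sym X r (P : G -> Prop) p q : conn X r P p q -> conn X r P q p.
Proof.
  intros [n [s [s0 [sn [sP sd]]]]].
  exists n, (fun i => s (n - i)). repeat split.
  - now rewrite Nat.sub_0_r.
  - now rewrite Nat.sub_diag.
  - intros i Hi. apply sP. lia.
  - intros i Hi. apply dist_sym. replace (n - i) with (S (n - S i)) by lia. apply sd. lia.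
Qed.

End G.

Arguments conn {G}.

Lemma conn_map (G G' : group) (X : list G) (X' : list G') r r' (P : G -> Prop) (P' : G' -> Prop)
  (f : G -> G') x y :
  conn X r P x y -> (forall z, P z -> P' (f z)) ->
  (forall z w, dist_le X r z w -> dist_le X' r' (f z) (f w)) ->
  conn X' r' P' (f x) (f y).
Proof.
  intros [n [s [s0 [sn [sP sd]]]]] HP Hd.
  exists n, (fun i => f (s i)). repeat split.
  - now rewrite s0.
  - now rewrite sn.
  - intros i Hi. apply HP, sP, Hi.
  - intros i Hi. apply Hd, sd, Hi.
Qed.

Section Prod.
Variables A B : group.
Variable XA : list A.
Variable XB : list B.

Definition PG := prod_group A B.

Definition Xp : list PG :=
  map (fun x => ((x, gone) : PG)) XA ++ map (fun y => ((gone, y) : PG)) XB.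

Definition liftA (w : list (A * bool)) : list (PG * bool) :=
  map (fun l => (((fst l, gone) : PG), snd l)) w.
Definition liftB (w : list (B * bool)) : list (PG * bool) :=
  map (fun l => (((gone, fst l) : PG), snd l)) w.

Lemma pmul (a x : A) (b y : B) : @gmul PG (a, b) (x, y) = (gmul a x, gmul b y).
Proof. reflexivity. Qed.
Lemma pinv (a : A) (b : B) : @ginv PG (a, b) = (ginv a, ginv b).
Proof. reflexivity. Qed.
Lemma pone : @gone PG = (gone, gone).
Proof. reflexivity. Qed.

Lemma eval_liftA w : eval_word (liftA w) = ((eval_word w, gone) : PG).
Proof.
  induction w as [|[x b] w IH]; [reflexivity|].
  change (eval_word (liftA ((x, b) :: w))) with
    (gmul (if b then ginv ((x, gone) : PG) else ((x, gone) : PG)) (eval_word (liftA w))).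
  rewrite IH. simpl eval_word.
  destruct b; rewrite ?pinv, pmul, ?ginv_one, g1mul; reflexivity.
Qed.

Lemma eval_liftB w : eval_word (liftB w) = ((gone, eval_word w) : PG).
Proof.
  induction w as [|[x b] w IH]; [reflexivity|].
  change (eval_word (liftB ((x, b) :: w))) with
    (gmul (if b then ginv ((gone, x) : PG) else ((gone, x) : PG)) (eval_word (liftB w))).
  rewrite IH. simpl eval_word.
  destruct b; rewrite ?pinv, pmul, ?ginv_one, g1mul; reflexivity.
Qed.

Lemma word_liftA w : word_over XA w -> word_over Xp (liftA w).
Proof.
  intros H l Hl. unfold liftA in Hl. apply in_map_iff in Hl.
  destruct Hl as [l0 [<- Hl0]]. simpl. unfold Xp. apply in_or_app. left.
  apply in_map_iff. exists (fst l0). split; auto.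
Qed.

Lemma word_liftB w : word_over XB w -> word_over Xp (liftB w).
Proof.
  intros H l Hl. unfold liftB in Hl. apply in_map_iff in Hl.
  destruct Hl as [l0 [<- Hl0]]. simpl. unfold Xp. apply in_or_app. right.
  apply in_map_iff. exists (fst l0). split; auto.
Qed.

Lemma word_app {G : group} (X : list G) w1 w2 :
  word_over X w1 -> word_over X w2 -> word_over X (w1 ++ w2).
Proof. intros H1 H2 l Hl. apply in_app_or in Hl. destruct Hl; auto. Qed.

Lemma dist_prod r1 r2 (a a' : A) (b b' : B) :
  dist_le XA r1 a a' -> dist_le XB r2 b b' -> dist_le Xp (r1 + r2) ((a, b) : PG) (a', b').
Proof.
  intros [w1 [H1 [L1 E1]]] [w2 [H2 [L2 E2]]].
  exists (liftA w1 ++ liftB w2). split; [apply word_app; [apply word_liftA|apply word_liftB]; auto|].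
  split.
  - rewrite length_app. unfold liftA, liftB. rewrite !length_map. lia.
  - rewrite eval_app, eval_liftA, eval_liftB, pmul, pinv, pmul, gmul1, g1mul, E1, E2.
    reflexivity.
Qed.

Lemma gen_prod : generates XA -> generates XB -> generates Xp.
Proof.
  intros HA HB [a b]. destruct (HA a) as [w1 [H1 E1]]. destruct (HB b) as [w2 [H2 E2]].
  exists (liftA w1 ++ liftB w2). split; [apply word_app; [apply word_liftA|apply word_liftB]; auto|].
  rewrite eval_app, eval_liftA, eval_liftB, pmul, gmul1, g1mul, E1, E2. reflexivity.
Qed.

Lemma lo_prod : left_orderable A -> left_orderable B -> left_orderable PG.
Proof.
  intros [ltA [iA [tA [cA lA]]]] [ltB [iB [tB [cB lB]]]].
  exists (fun p q : PG => ltA (fst p) (fst q) \/ (fst p = fst q /\ ltB (snd p) (snd q))).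
  split; [|split; [|split]].
  - intros [a b] [H|[_ H]]; [exact (iA _ H) | exact (iB _ H)].
  - intros [a b] [a' b'] [a'' b'']; simpl.
    intros [H1|[E1 H1]] [H2|[E2 H2]].
    + left; eauto.
    + left; now rewrite <- E2.
    + left; now rewrite E1.
    + right; split; [congruence | eauto].
  - intros [a b] [a' b']; simpl.
    destruct (cA a a') as [H|[H|H]]; [left; left; auto| |right; right; left; auto].
    subst a'. destruct (cB b b') as [H|[H|H]].
    + left; right; auto.
    + right; left; congruence.
    + right; right; right; auto.
  - intros [g h] [a b] [a' b']; simpl. intros [H|[E H]].
    + left; auto.
    + right; split; [congruence| auto].
Qed.

Lemma coneA (P : PG -> Prop) : positive_cone P -> positive_cone (fun a : A => P (a, gone)).
Proof.
  intros [H1 [H2 [H3 [H4 H5]]]]. repeat split.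
  - intros x y Hx Hy. pose proof (H1 _ _ Hx Hy) as H. rewrite pmul, gmul1 in H. exact H.
  - intros g. destruct (H2 (g, gone)) as [H|[H|H]]; auto.
    + right; left. rewrite pinv, ginv_one in H. exact H.
    + right; right. injection H; auto.
  - intros g Hg Hi. apply (H3 _ Hg). rewrite pinv, ginv_one. exact Hi.
  - intros g Hg E. subst g. apply (H4 _ Hg). reflexivity.
  - intros g Hg E. subst g. apply (H5 (gone, gone)); [|reflexivity].
    rewrite pinv, !ginv_one. rewrite ginv_one in Hg. exact Hg.
Qed.

Lemma coneB (P : PG -> Prop) : positive_cone P -> positive_cone (fun b : B => P (gone, b)).
Proof.
  intros [H1 [H2 [H3 [H4 H5]]]]. repeat split.
  - intros x y Hx Hy. pose proof (H1 _ _ Hx Hy) as H. rewrite pmul, gmul1 in H. exact H.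
  - intros g. destruct (H2 (gone, g)) as [H|[H|H]]; auto.
    + right; left. rewrite pinv, ginv_one in H. exact H.
    + right; right. injection H; auto.
  - intros g Hg Hi. apply (H3 _ Hg). rewrite pinv, ginv_one. exact Hi.
  - intros g Hg E. subst g. apply (H4 _ Hg). reflexivity.
  - intros g Hg E. subst g. apply (H5 (gone, gone)); [|reflexivity].
    rewrite pinv, !ginv_one. rewrite ginv_one in Hg. exact Hg.
Qed.

End Prod.
Arguments Xp {A B}.
Arguments liftA {A B}.
Arguments liftB {A B}.
Arguments coneA {A B P}.
Arguments coneB {A B P}.
Lemma conn_end (G : group) X r (P : G -> Prop) p q : conn X r P p q -> P q.
Proof. intros [n [s [_ [sn [sP _]]]]]. rewrite <- sn. apply sP. lia. Qed.

Theorem proposition4p17 (A B : group) :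
  finitely_generated A -> left_orderable A ->
  finitely_generated B -> left_orderable B ->
  prieto A -> prieto B -> prieto (prod_group A B).
Proof.
  intros _ loA _ loB [_ [_ [XA [genA HPA]]]] [_ [_ [XB [genB HPB]]]].
  split; [exists (Xp XA XB); now apply gen_prod|].
  split; [now apply lo_prod|].
  exists (Xp XA XB). split; [now apply gen_prod|].
  intros P HP.
  pose proof HP as [Pc [Ptri [Pasym [Pne1 Pne2]]]].
  destruct (HPA _ (coneA HP)) as [rA [HrA CA]].
  destruct (HPB _ (coneB HP)) as [rB [HrB CB]].
  change (forall p q, P (p, gone) -> P (q, gone) -> conn XA rA (fun a => P (a, gone)) p q) in CA.
  change (forall p q, P (gone, p) -> P (gone, q) -> conn XB rB (fun b => P (gone, b)) p q) in CB.
  destruct (classic (exists a : A, a <> gone)) as [[a1 Ha1]|TA].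
  2:{ assert (TA' : forall a : A, a = gone).
      { intro a. apply NNPP. intro H. apply TA. exists a. exact H. }
      exists rB. split; [exact HrB|].
      intros [a b] [a' b'] Hp Hq. rewrite (TA' a), (TA' a') in *.
      apply (conn_map _ _ _ _ _ _ _ _ (fun y : B => ((gone, y) : PG A B)) _ _ (CB b b' Hp Hq)); auto.
      intros z w Hd. apply (dist_prod _ _ XA XB 0 rB); [apply dist_refl0|exact Hd]. }
  destruct (classic (exists b : B, b <> gone)) as [[b1 Hb1]|TB].
  2:{ assert (TB' : forall b : B, b = gone).
      { intro b. apply NNPP. intro H. apply TB. exists b. exact H. }
      exists rA. split; [exact HrA|].
      intros [a b] [a' b'] Hp Hq. rewrite (TB' b), (TB' b') in *.
      apply (conn_map _ _ _ _ _ _ _ _ (fun y : A => ((y, gone) : PG A B)) _ _ (CA a a' Hp Hq)); auto.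
      intros z w Hd. replace rA with (rA + 0) by lia.
      apply (dist_prod _ _ XA XB rA 0); [exact Hd|apply dist_refl0]. }
  pose proof (coneA HP) as [PAc [PAtri _]].
  pose proof (coneB HP) as [PBc [PBtri _]].
  assert (HA0 : exists a0 : A, P (a0, gone)).
  { destruct (PAtri a1) as [H|[H|H]]; [eauto|eauto|contradiction]. }
  assert (HB0 : exists b0 : B, P (gone, b0)).
  { destruct (PBtri b1) as [H|[H|H]]; [eauto|eauto|contradiction]. }
  destruct HA0 as [a0 Ha0]. destruct HB0 as [b0 Hb0].
  destruct (genA a0) as [wa0 [Wa0 Ea0]].
  destruct (genB b0) as [wb0 [Wb0 Eb0]].
  set (R := rA + rB + length wa0 + length wb0).
  assert (liftA_d : forall (h : PG A B) x y, dist_le XA rA x y ->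
     dist_le (Xp XA XB) R (gmul h ((x, gone) : PG A B)) (gmul h ((y, gone) : PG A B))).
  { intros h x y Hd. apply dist_mono with (rA + 0); [unfold R; lia|].
    apply dist_left. apply dist_prod; [exact Hd|apply dist_refl0]. }
  assert (liftB_d : forall (h : PG A B) x y, dist_le XB rB x y ->
     dist_le (Xp XA XB) R (gmul h ((gone, x) : PG A B)) (gmul h ((gone, y) : PG A B))).
  { intros h x y Hd. apply dist_mono with (0 + rB); [unfold R; lia|].
    apply dist_left. apply dist_prod; [apply dist_refl0|exact Hd]. }
  assert (jumpA : forall h : PG A B, dist_le (Xp XA XB) R h (gmul h ((a0, gone) : PG A B))).
  { intro h. rewrite <- Ea0, <- eval_liftA. apply dist_right.
    - now apply word_liftA.
    - unfold liftA, R. rewrite length_map. lia. }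
  assert (jumpB : forall h : PG A B, dist_le (Xp XA XB) R h (gmul h ((gone, b0) : PG A B))).
  { intro h. rewrite <- Eb0, <- eval_liftB. apply dist_right.
    - now apply word_liftB.
    - unfold liftB, R. rewrite length_map. lia. }
  assert (SA : forall a b, P (a, b) -> exists a', P (a', gone) /\
             conn (Xp XA XB) R P ((a, b) : PG A B) (a', b)).
  { intros a b Hab.
    assert (exists x, P (x, gone) /\ P (gmul a x, gone)) as [x [Hx Hax]].
    { destruct (PAtri a) as [H|[H|H]].
      - exists a0. split; auto.
      - exists (gmul (ginv a) a0). split; auto. rewrite gmulA, gmulV, g1mul. auto.
      - subst a. exists a0. rewrite g1mul. auto. }
    exists (gmul a x). split; auto.
    apply conn_trans with (y := gmul ((a, b) : PG A B) (a0, gone)).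
    - apply conn_step; auto.
    - replace ((gmul a x, b) : PG A B) with (gmul ((a, b) : PG A B) (x, gone))
        by (rewrite pmul, gmul1; reflexivity).
      apply (conn_map _ _ _ _ _ _ _ _ (fun z : A => gmul ((a, b) : PG A B) ((z, gone) : PG A B))
               _ _ (CA a0 x Ha0 Hx)); auto. }
  assert (SB : forall a b, P (a, b) -> exists b', P (gone, b') /\
             conn (Xp XA XB) R P ((a, b) : PG A B) (a, b')).
  { intros a b Hab.
    assert (exists y, P (gone, y) /\ P (gone, gmul b y)) as [y [Hy Hby]].
    { destruct (PBtri b) as [H|[H|H]].
      - exists b0. split; auto.
      - exists (gmul (ginv b) b0). split; auto. rewrite gmulA, gmulV, g1mul. auto.
      - subst b. exists b0. rewrite g1mul. auto. }
    exists (gmul b y). split; auto.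
    apply conn_trans with (y := gmul ((a, b) : PG A B) (gone, b0)).
    - apply conn_step; auto.
    - replace ((a, gmul b y) : PG A B) with (gmul ((a, b) : PG A B) (gone, y))
        by (rewrite pmul, gmul1; reflexivity).
      apply (conn_map _ _ _ _ _ _ _ _ (fun z : B => gmul ((a, b) : PG A B) ((gone, z) : PG A B))
               _ _ (CB b0 y Hb0 Hy)); auto. }
  assert (SC : forall a b, P (a, gone) -> P (gone, b) ->
             conn (Xp XA XB) R P ((a, b) : PG A B) (a0, b0)).
  { intros a b Ha Hb.
    apply conn_trans with (y := ((a0, b) : PG A B)).
    - replace ((a, b) : PG A B) with (gmul ((gone, b) : PG A B) (a, gone))
        by (rewrite pmul, gmul1, g1mul; reflexivity).
      replace ((a0, b) : PG A B) with (gmul ((gone, b) : PG A B) (a0, gone))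
        by (rewrite pmul, gmul1, g1mul; reflexivity).
      apply (conn_map _ _ _ _ _ _ _ _ (fun z : A => gmul ((gone, b) : PG A B) ((z, gone) : PG A B))
               _ _ (CA a a0 Ha Ha0)); auto.
    - replace ((a0, b) : PG A B) with (gmul ((a0, gone) : PG A B) (gone, b))
        by (rewrite pmul, gmul1, g1mul; reflexivity).
      replace ((a0, b0) : PG A B) with (gmul ((a0, gone) : PG A B) (gone, b0))
        by (rewrite pmul, gmul1, g1mul; reflexivity).
      apply (conn_map _ _ _ _ _ _ _ _ (fun z : B => gmul ((a0, gone) : PG A B) ((gone, z) : PG A B))
               _ _ (CB b b0 Hb Hb0)); auto. }
  assert (Base : forall p : PG A B, P p -> conn (Xp XA XB) R P p (a0, b0)).
  { intros [a b] Hab.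
    destruct (SA a b Hab) as [a' [Ha' C1]].
    assert (Hab' : P (a', b)) by exact (conn_end _ _ _ _ _ _ C1).
    destruct (SB a' b Hab') as [b' [Hb' C2]].
    apply conn_trans with (y := ((a', b) : PG A B)); [exact C1|].
    apply conn_trans with (y := ((a', b') : PG A B)); [exact C2|].
    auto. }
  exists R. split; [unfold R; lia|].
  intros p q Hp Hq. apply conn_trans with (y := ((a0, b0) : PG A B)); [auto|].
  apply conn_sym. auto.
Qed.
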